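(* Let $N=2^{L}$ with $L=L_1+L_2$, $L_1,L_2\ge1$, and split the index set $I=\{1,\dots,N\}$ into $n_2=2^{L_2}$ consecutive non-overlapping subintervals $I=\bigcup_{k=1}^{n_2}I_k$, each of length $n_1=2^{L_1}$. Let $\mathbf x_0\in\mathbb R^{n_1}$ have QTT rank $r_0$. For $k=1,\dots,n_2$ define $\mathbf x_k\in\mathbb R^N$ by: the restriction of $\mathbf x_k$ to $I_k$ equals $\mathbf x_0$, and $\mathbf x_k(i)=0$ for $i\in I\setminus I_k$. Let $\mathbf x=\mathbf x_1+\dots+\mathbf x_{n_2}$. Then for every $F\in\mathbb R^N$, $$\operatorname{rank}_{QTT}(F\odot\mathbf x)\le\operatorname{rank}_{QTT}(F)\,r_0.$$
   Context: $\odot$ denotes the entrywise (Hadamard) product of vectors. QTT (quantics tensor train) rank: a vector $\mathbf y\in\mathbb R^{2^m}$ is reshaped into a tensor $Y\in\mathbb R^{2\times\cdots\times2}$ of order $m$ via the binary coding $i-1=\sum_{\ell=1}^m(j_\ell-1)2^{\ell-1}$, $j_\ell\in\{1,2\}$, i.e. $Y(j_1,\dots,j_m)=\mathbf y(i)$. The TT ranks of $Y$ are $r_\ell=\operatorname{rank}$ of the unfolding matrix with rows indexed by $(j_1,\dots,j_\ell)$ and columns by $(j_{\ell+1},\dots,j_m)$, $\ell=1,\dots,m-1$; $\operatorname{rank}_{QTT}(\mathbf y)=\max_\ell r_\ell$. *)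

(* Defs.v *)
From mathcomp Require Import all_boot all_algebra.
Set Implicit Arguments. Unset Strict Implicit. Unset Printing Implicit Defensive.
Import GRing.Theory Num.Theory.
Local Open Scope ring_scope.

(* A vector y in R^(2^m) is a function 'I_(2^m) -> R; indices are 0-based:
   0-based index i corresponds to the paper's i+1. *)

(* Extension of a finite vector to nat indices (zero outside the range);
   only ever evaluated at in-range indices below. *)
Definition vext (R : nzRingType) (n : nat) (y : 'I_n -> R) (j : nat) : R :=
  odflt 0 (omap y (insub j)).

(* The l-th QTT unfolding of y in R^(2^m): rows indexed by (j_1..j_l), i.e. the
   l low-order bits a < 2^l, columns by (j_(l+1)..j_m), i.e. b < 2^(m-l);
   entry = y(a + 2^l b)   (binary coding i-1 = sum (j_k-1) 2^(k-1)). *)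
Definition qtt_unfold (R : nzRingType) (m : nat) (l : 'I_m.+1) (y : 'I_(2^m) -> R)
  : 'M[R]_(2^l, 2^(m-l)) :=
  \matrix_(a < 2^l, b < 2^(m-l)) vext y (a + 2^l * b)%N.

(* The boundary unfoldings l = 0 and
   l = m (rank 1 if y <> 0, 0 if y = 0) are included; this agrees with
   max_{l=1..m-1} r_l whenever m >= 2 and gives the standard value 1 for
   nonzero vectors when m = 1. *)
Definition qtt_rank (R : fieldType) (m : nat) (y : 'I_(2^m) -> R) : nat :=
  \max_(l < m.+1) \rank (qtt_unfold l y).

Definition hadamard (R : nzRingType) (n : nat) (u v : 'I_n -> R) : 'I_n -> R :=
  fun i => u i * v i.

(* x_k (k = 0..n2-1, 0-based): equals x0 on I_k = [k n1, (k+1) n1), zero elsewhere *)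
Definition block_vec (R : nzRingType) (L1 L2 : nat) (x0 : 'I_(2^L1) -> R) (k : nat)
  : 'I_(2^(L1 + L2)) -> R :=
  fun i => if ((k * 2^L1 <= i) && (i < k.+1 * 2^L1))%N
           then vext x0 (i - k * 2^L1)%N else 0.

Definition periodic_vec (R : nzRingType) (L1 L2 : nat) (x0 : 'I_(2^L1) -> R)
  : 'I_(2^(L1 + L2)) -> R :=
  fun i => \sum_(k < 2^L2) @block_vec R L1 L2 x0 k i.

(* Main.v *)
Require Import Defs.
From mathcomp Require Import all_boot all_algebra zify.
Set Implicit Arguments. Unset Strict Implicit. Unset Printing Implicit Defensive.
Import GRing.Theory Num.Theory.
Local Open Scope ring_scope.

Lemma rank_mxsub (R : fieldType) m n m' n' (f : 'I_m' -> 'I_m) (g : 'I_n' -> 'I_n) (A : 'M[R]_(m,n)) :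
  (\rank (mxsub f g A) <= \rank A)%N.
Proof.
have -> : mxsub f g A = rowsub f (colsub g A) by apply/matrixP=> i j; rewrite !mxE.
rewrite rowsubE; apply: leq_trans (mxrankM_maxr _ _) _.
rewrite -mxrank_tr trmx_mxsub rowsubE; apply: leq_trans (mxrankM_maxr _ _) _.
by rewrite mxrank_tr.
Qed.

Lemma rank_add (R : fieldType) m n (A B : 'M[R]_(m,n)) :
  (\rank (A + B)%R <= \rank A + \rank B)%N.
Proof.
have H : ((A + B)%R <= A + B)%MS by apply: addmx_sub_adds; apply: submx_refl.
apply: leq_trans (mxrankS H) _.
by rewrite mxrank_adds_leqif.
Qed.

Lemma rank_sum (R : fieldType) m n k (M : 'I_k -> 'M[R]_(m,n)) :
  (\rank (\sum_(i < k) M i)%R <= \sum_(i < k) \rank (M i))%N.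
Proof.
elim: k M => [|k IH] M; first by rewrite !big_ord0 mxrank0.
rewrite !big_ord_recr /=; apply: leq_trans (rank_add _ _) _.
by rewrite leq_add2r IH.
Qed.

Definition hadm (R : nzRingType) m n (A B : 'M[R]_(m,n)) := \matrix_(i, j) (A i j * B i j).

Lemma rank_hadm (R : fieldType) m n (A B : 'M[R]_(m,n)) :
  (\rank (hadm A B) <= \rank A * \rank B)%N.
Proof.
have -> : hadm A B = (\sum_(i < \rank A)
   (diag_mx (col i (col_base A))^T *m B *m diag_mx (row i (row_base A))))%R.
  apply/matrixP => a b; rewrite summxE mxE.
  rewrite -{1}(mulmx_base A).
  set C := col_base A; set D := row_base A.
  rewrite mxE big_distrl /=.
  apply: eq_bigr => i _.
  rewrite mul_mx_diag mxE mul_diag_mx !mxE.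
  by rewrite mulrAC.
apply: leq_trans (rank_sum _) _.
rewrite -[X in (_ <= X * _)%N]card_ord -sum_nat_const.
apply: leq_sum => i _.
apply: leq_trans (mxrankM_maxl _ _) _.
exact: mxrankM_maxr.
Qed.
Lemma A1 (a b l m : nat) : (a < 2^l)%N -> (b < 2^(m-l))%N -> (l <= m)%N -> (a + 2^l*b < 2^m)%N.
Proof.
move=> ha hb hl; have -> : (2^m = 2^l * 2^(m-l))%N by rewrite -expnD subnKC.
move: ha hb; set P := (2^l)%N; set Q := (2^(m-l))%N => ha hb; nia.
Qed.

Lemma A2 (a b l L1 : nat) : (l <= L1)%N -> (a < 2^l)%N ->
  ((a + 2^l*b) %% 2^L1 = a + 2^l*(b %% 2^(L1-l)))%N.
Proof.
move=> hl ha; have -> : (2^L1 = 2^l * 2^(L1-l))%N by rewrite -expnD subnKC.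
have hQ : (0 < 2^(L1-l))%N by rewrite expn_gt0.
rewrite {1}(divn_eq b (2^(L1-l))).
have hr : (b %% 2^(L1-l) < 2^(L1-l))%N by rewrite ltn_pmod.
move: ha hr hQ; set P := (2^l)%N; set Q := (2^(L1-l))%N; set r := (b %% Q)%N; set q := (b %/ Q)%N => ha hr hQ.
have -> : (a + P * (q * Q + r) = q * (P * Q) + (a + P * r))%N by nia.
rewrite modnMDl modn_small //; nia.
Qed.

Lemma A3 (a b l L1 : nat) : (L1 <= l)%N -> ((a + 2^l*b) %% 2^L1 = a %% 2^L1)%N.
Proof.
move=> hl; have -> : (2^l = 2^L1 * 2^(l-L1))%N by rewrite -expnD subnKC.
have -> : (a + 2 ^ L1 * 2 ^ (l - L1) * b = (2 ^ (l - L1) * b) * 2^L1 + a)%N by nia.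
by rewrite modnMDl.
Qed.

Section S.
Variable R : fieldType.

Lemma vextE n (y : 'I_n -> R) (i : 'I_n) : vext y i = y i.
Proof. by rewrite /vext valK. Qed.

Lemma vext_hadamard n (u v : 'I_n -> R) j : vext (hadamard u v) j = vext u j * vext v j.
Proof. by rewrite /vext; case: insubP => [k _ _|_] /=; rewrite ?mul0r. Qed.

Lemma vext_periodic L1 L2 (x0 : 'I_(2^L1) -> R) j : (j < 2^(L1+L2))%N ->
  vext (@periodic_vec R L1 L2 x0) j = vext x0 (j %% 2^L1).
Proof.
move=> hj; rewrite /vext insubT /= /periodic_vec.
have hP : (0 < 2^L1)%N by rewrite expn_gt0.
have hk : (j %/ 2^L1 < 2^L2)%N by rewrite ltn_divLR // mulnC -expnD.
rewrite (bigD1 (Ordinal hk)) //= big1 ?addr0.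
  rewrite /block_vec /= leq_trunc_div ltn_ceil //=.
  by rewrite {1}(divn_eq j (2^L1)) addKn.
move=> k hk'; rewrite /block_vec.
case: ifP => // /andP [h1 h2]; exfalso; move/eqP: hk'; apply.
apply: val_inj => /=; apply/eqP; rewrite eqn_leq.
move: h1 h2 => /= h1 h2; rewrite leq_divRL // h1 /= -ltnS ltn_divLR //.
Qed.
End S.
Lemma key (R : fieldType) L1 L2 (x0 : 'I_(2^L1) -> R) (l : 'I_(L1+L2).+1) :
  (\rank (qtt_unfold l (@periodic_vec R L1 L2 x0)) <= qtt_rank x0)%N.
Proof.
have hl : (l <= L1 + L2)%N by rewrite -ltnS.
case: (leqP l L1) => hl1.
- have hl' : (l < L1.+1)%N by [].
  pose l' := Ordinal hl'.
  have hg : forall b : 'I_(2^(L1+L2-l)), (b %% 2^(L1-l) < 2^(L1 - l'))%N.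
    by move=> b; rewrite ltn_pmod // expn_gt0.
  pose g := fun b => Ordinal (hg b).
  pose f := fun a : 'I_(2^l) => (a : 'I_(2^l')).
  have -> : qtt_unfold l (@periodic_vec R L1 L2 x0) = mxsub f g (qtt_unfold l' x0).
    apply/matrixP => a b; rewrite !mxE /=.
    rewrite vext_periodic; last by apply: A1.
    by rewrite A2.
  apply: leq_trans (rank_mxsub _ _ _) _.
  by rewrite /qtt_rank; exact: (@leq_bigmax _ (fun l0 : 'I_L1.+1 => \rank (qtt_unfold l0 x0)) l').
- pose l' : 'I_L1.+1 := ord_max.
  have hf : forall a : 'I_(2^l), (a %% 2^L1 < 2^l')%N.
    by move=> a; rewrite ltn_pmod // expn_gt0.
  pose f := fun a => Ordinal (hf a).
  have hg : (0 < 2^(L1 - l'))%N by rewrite expn_gt0.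
  pose g := fun b : 'I_(2^(L1+L2-l)) => Ordinal hg.
  have -> : qtt_unfold l (@periodic_vec R L1 L2 x0) = mxsub f g (qtt_unfold l' x0).
    apply/matrixP => a b; rewrite !mxE /=.
    rewrite vext_periodic; last by apply: A1.
    by rewrite A3 ?muln0 ?addn0 // ltnW.
  apply: leq_trans (rank_mxsub _ _ _) _.
  by rewrite /qtt_rank; exact: (@leq_bigmax _ (fun l0 : 'I_L1.+1 => \rank (qtt_unfold l0 x0)) l').
Qed.

Theorem lemma4p2 (R : realFieldType) (L1 L2 : nat) (hL1 : (1 <= L1)%N) (hL2 : (1 <= L2)%N)
  (x0 : 'I_(2^L1) -> R) (F : 'I_(2^(L1 + L2)) -> R) :
  (qtt_rank (hadamard F (@periodic_vec R L1 L2 x0)) <= qtt_rank F * qtt_rank x0)%N.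
Proof.
apply/bigmax_leqP => l _.
have -> : qtt_unfold l (hadamard F (@periodic_vec R L1 L2 x0)) =
   hadm (qtt_unfold l F) (qtt_unfold l (@periodic_vec R L1 L2 x0)).
  by apply/matrixP => a b; rewrite !mxE vext_hadamard.
apply: leq_trans (rank_hadm _ _) _.
apply: leq_mul; last exact: key.
by rewrite /qtt_rank; exact: (@leq_bigmax _ (fun l0 : 'I_(L1+L2).+1 => \rank (qtt_unfold l0 F)) l).
Qed.
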